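(* Let $D$ be a regular $(v,k,\lambda,\mu)$-PDS in a finite group $G$ with $0<\mu<k$ and $\sqrt\Delta\in\mathbb{Z}$. Let $p$ be a prime dividing $\sqrt\Delta$ and $p^\ell$ the exact power of $p$ dividing $\sqrt\Delta$. If $h\in G$, $h\ne1$, and $p^\ell\nmid|C_G(h)|$, then \[|h^G\cap D|\,|C_G(h)|\equiv k-\theta_2\pmod{p^\ell},\] and for $h=1$, $|h^G\cap D|\,|C_G(h)|\equiv k+\theta_2(|G|-1)\pmod{p^\ell}$.
   Context: A $(v,k,\lambda,\mu)$-PDS in a group $G$ of order $v$ is a $k$-subset $D$ such that every nonidentity element of $D$ is $xy^{-1}$ ($x,y\in D$) in exactly $\lambda$ ways and every nonidentity element of $G\setminus D$ in exactly $\mu$ ways; regular means $D=D^{(-1)}$ and $1\notin D$. $\Delta=(\lambda-\mu)^2+4(k-\mu)$, $\theta_2=\frac12(\lambda-\mu-\sqrt\Delta)$. *)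

(* Defs.v *)
From HB Require Import structures.
From mathcomp Require Import all_boot all_order all_algebra all_fingroup.
Set Implicit Arguments. Unset Strict Implicit. Unset Printing Implicit Defensive.
Import GRing.Theory Num.Theory.

Definition nrep (gT : finGroupType) (D : {set gT}) (g : gT) : nat :=
  #|[set xy : gT * gT | [&& xy.1 \in D, xy.2 \in D & (xy.1 * xy.2^-1)%g == g]]|.

Definition is_PDS (gT : finGroupType) (G : {group gT}) (D : {set gT})
    (v k lam mu : nat) : Prop :=
  [/\ D \subset G, #|G| = v, #|D| = k &
      forall g, g \in G -> g != 1%g ->
        nrep D g = (if g \in D then lam else mu)].

Definition regular_PDS (gT : finGroupType) (D : {set gT}) : Prop :=
  [set (x^-1)%g | x in D] = D /\ (1%g \notin D).

Definition PDS_Delta (k lam mu : nat) : int :=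
  ((lam%:Z - mu%:Z) ^+ 2 + 4 * (k%:Z - mu%:Z))%R.

(* theta_2 = (lambda - mu - sqrt Delta)/2, given s = sqrt Delta (a nonnegative
   integer); this division is exact since s^2 = Delta forces s = lambda - mu mod 2 *)
Definition theta2 (lam mu s : nat) : int :=
  ((lam%:Z - mu%:Z - s%:Z) %/ 2)%Z.

(* Main.v *)
Require Import Defs.
From HB Require Import structures.
From mathcomp Require Import all_boot all_order all_algebra all_fingroup all_field all_character.
Import GRing.Theory Num.Theory.
Local Open Scope ring_scope.

Lemma trace_pid (F : fieldType) n r : (r <= n)%N ->
  \tr (pid_mx r : 'M[F]_n) = r%:R.
Proof.
move=> rn; rewrite /mxtrace.
rewrite (eq_bigr (fun i : 'I_n => ((i < r)%N)%:R)); last first.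
  by move=> i _; rewrite mxE eqxx.
rewrite -(big_mkord (fun=> true) (fun i => ((i < r)%N)%:R : F)).
rewrite (big_cat_nat (leq0n r) rn) /=.
rewrite [X in _ + X]big1_seq ?addr0; last first.
  by move=> i /andP[_]; rewrite mem_index_iota => /andP[ri _]; rewrite ltnNge ri.
rewrite (eq_big_seq (fun=> 1)); last by move=> i; rewrite mem_index_iota => /andP[_ ->].
by rewrite sumr_const_nat subn0.
Qed.

Lemma trace_idem (F : fieldType) n (P : 'M[F]_n) : P *m P = P ->
  \tr P = (\rank P)%:R.
Proof.
move=> PP.
have Cu := col_ebase_unit P; have Ru := row_ebase_unit P.
set C := col_ebase P in PP Cu *; set R := row_ebase P in PP Ru *.
set p := (pid_mx (\rank P) : 'M[F]_n).
have eP : P = C *m p *m R by rewrite mulmx_ebase.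
have rn : (\rank P <= n)%N by apply: rank_leq_row.
have pp : p *m p = p by rewrite /p pid_mx_id.
have key : p *m (R *m C) *m p = p.
  have : C *m (p *m (R *m C) *m p) *m R = C *m p *m R.
    by rewrite -eP -[in RHS]PP [in RHS]eP !mulmxA.
  move=> H.
  have H2 := congr1 (fun M => invmx C *m M *m invmx R) H.
  move: H2 => /=; rewrite !mulmxA (mulVmx Cu) !mul1mx -!mulmxA (mulmxV Ru) !mulmx1.
  by rewrite !mulmxA.
have -> : \tr P = \tr (p *m (R *m C)).
  by rewrite {1}eP -mulmxA mxtrace_mulC -mulmxA.
rewrite -{1}pp -mulmxA mxtrace_mulC key /p trace_pid //.
Qed.

Lemma dsum_nrep (gT : finGroupType) (G : {group gT}) (D : {set gT}) (V : nmodType)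
  (F : gT -> V) : D \subset G ->
  \sum_(d in D) \sum_(e in D) F (d * e^-1)%g = \sum_(g in G) F g *+ nrep D g.
Proof.
move=> sDG.
rewrite pair_big_dep.
rewrite (partition_big (fun p : gT * gT => (p.1 * p.2^-1)%g) (mem G)); last first.
  by case=> x y /andP[xD yD]; rewrite /= groupM ?groupV ?(subsetP sDG).
apply: eq_bigr => g _.
rewrite (eq_bigr (fun=> F g)); last by move=> p /andP[_ /eqP ->].
rewrite sumr_const /nrep; congr (_ *+ _).
by apply: eq_card => p; rewrite inE !unfold_in /= andbA.
Qed.

Lemma nrep1 (gT : finGroupType) (D : {set gT}) : nrep D 1%g = #|D|.
Proof.
have inj : injective (fun x : gT => (x, x)) by move=> x y [].
rewrite /nrep -(card_imset D inj).
apply: eq_card => -[x y]; rewrite inE /= -eq_mulgV1.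
apply/andP/imsetP => [[xD /andP[yD /eqP <-]] | [z zD [-> ->]]]; first by exists x.
by rewrite zD eqxx.
Qed.

Lemma sum_nrep (gT : finGroupType) (G : {group gT}) (D : {set gT}) v k lam mu
  (V : lmodType algC) (F : gT -> V) :
  is_PDS G D v k lam mu -> regular_PDS D ->
  \sum_(g in G) F g *+ nrep D g =
   (k%:R - mu%:R) *: F 1%g + (lam%:R - mu%:R) *: \sum_(g in D) F g
     + mu%:R *: \sum_(g in G) F g.
Proof.
case=> sDG _ cD Hn [_ D1].
have -> : \sum_(g in D) F g = \sum_(g in G) (g \in D)%:R *: F g.
  rewrite [RHS](eq_bigr (fun g => if g \in D then F g else 0)); last first.
    by move=> g _; case: (g \in D); rewrite ?scale1r ?scale0r.
  rewrite -big_mkcondr; apply: eq_bigl => g.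
  by case gD: (g \in D); rewrite ?andbT ?andbF ?(subsetP sDG).
have -> : F 1%g = \sum_(g in G) (g == 1%g)%:R *: F g.
  rewrite (bigD1 1%g) //= eqxx scale1r big1 ?addr0 // => g /andP[_ /negbTE ->].
  by rewrite scale0r.
rewrite !scaler_sumr -!big_split /=; apply: eq_bigr => g Gg.
rewrite !scalerA -!scalerDl -scaler_nat; congr (_ *: _).
have [->|ntg] := eqVneq g 1%g; first by rewrite nrep1 cD (negbTE D1) !mulr1 !mulr0 addr0 subrK.
rewrite Hn // !mulr0 add0r; case: (g \in D); rewrite ?mulr1 ?mulr0 ?add0r ?subrK //.
Qed.

From mathcomp Require Import ring.
From mathcomp Require Import zify.


Definition comb {n} (M S : 'M[algC]_n) (x y z : algC) := x *: 1%:M + y *: M + z *: S.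

Lemma comb_mul n (M S : 'M[algC]_n) a b m kk vv :
  M *m M = comb M S a b m -> M *m S = kk *: S -> S *m M = kk *: S -> S *m S = vv *: S ->
  forall x y z x' y' z',
  comb M S x y z *m comb M S x' y' z' =
  comb M S (x * x' + y * y' * a) (x * y' + y * x' + y * y' * b)
      (x * z' + z * x' + y * y' * m + y * z' * kk + z * y' * kk + z * z' * vv).
Proof.
move=> MM MS SM SS x y z x' y' z'.
rewrite {1 2}/comb !mulmxDl !mulmxDr -!scalemxAl -!scalemxAr !mul1mx !mulmx1.
rewrite MM MS SM SS /comb.
apply/matrixP=> i j; rewrite !mxE; ring.
Qed.

Lemma trace_comb n (M S : 'M[algC]_n) x y z :
  \tr (comb M S x y z) = x * n%:R + y * \tr M + z * \tr S.
Proof. by rewrite /comb !mxtraceD !mxtraceZ mxtrace1. Qed.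

Lemma kk_identity (gT : finGroupType) (G : {group gT}) (D : {set gT}) v k lam mu :
  is_PDS G D v k lam mu -> regular_PDS D ->
  (k%:R ^+ 2 : algC) = (k%:R - mu%:R) + (lam%:R - mu%:R) * k%:R + mu%:R * #|G|%:R.
Proof.
move=> hP hR; have [sDG _ cD _] := hP.
have H := @dsum_nrep _ G D _ (fun _ => (1 : algC^o)) sDG.
rewrite (@sum_nrep _ G D v k lam mu _ (fun _ => (1 : algC^o)) hP hR) in H.
move: H; rewrite !sumr_const cD => H.
have e (a b : algC) : a *: (b : algC^o) = a * b by [].
move: H; rewrite !e => H.
rewrite expr2 mulr_natr H; congr (_ + _ + _); exact: mulr1.
Qed.

Lemma repr_key (gT : finGroupType) (G : {group gT}) (D : {set gT}) v k lam mu s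
  (t : algC) n (rG : mx_representation algC G n) :
  is_PDS G D v k lam mu -> regular_PDS D ->
  s%:R != 0 :> algC ->
  lam%:R - mu%:R = 2 * t + s%:R ->
  t ^+ 2 + t * s%:R + (k%:R - mu%:R) = 0 ->
  exists r : nat,
   \sum_(d in D) cfRepr rG d = t * n%:R + s%:R * r%:R
      + (k%:R - t) * (#|G|%:R^-1 * \sum_(g in G) cfRepr rG g).
Proof.
move=> hP hR s0 hb ha.
have kk := @kk_identity _ G D v k lam mu hP hR.
have [sDG cG cD Hn] := hP; have [DV D1] := hR.
have v0 : (#|G|%:R : algC) != 0 by rewrite pnatr_eq0 -lt0n cardG_gt0.
have invD (e : gT) : ((e^-1)%g \in D) = (e \in D).
  apply/idP/idP => H; rewrite -DV; first by rewrite -[e]invgK; apply: imset_f.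
  exact: imset_f.
set M := \sum_(d in D) rG d; set S := \sum_(g in G) rG g.
have rGS x : x \in G -> rG x *m S = S.
  move=> Gx; rewrite /S mulmx_sumr [RHS](reindex_inj (mulgI x)) /=.
  apply: eq_big => [g | g Gg]; first by rewrite groupMl.
  by rewrite repr_mxM.
have SrG x : x \in G -> S *m rG x = S.
  move=> Gx; rewrite /S mulmx_suml [RHS](reindex_inj (mulIg x)) /=.
  apply: eq_big => [g | g Gg]; first by rewrite groupMr.
  by rewrite repr_mxM.
have MS : M *m S = k%:R *: S.
  rewrite /M mulmx_suml (eq_bigr (fun=> S)) => [|d dD]; last by rewrite rGS ?(subsetP sDG).
  by rewrite sumr_const cD scaler_nat.
have SM : S *m M = k%:R *: S.
  rewrite /M mulmx_sumr (eq_bigr (fun=> S)) => [|d dD]; last by rewrite SrG ?(subsetP sDG).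
  by rewrite sumr_const cD scaler_nat.
have SS : S *m S = #|G|%:R *: S.
  rewrite {1}/S mulmx_suml (eq_bigr (fun=> S)) => [|d dD]; last by rewrite rGS.
  by rewrite sumr_const scaler_nat.
have MM : M *m M = comb M S (k%:R - mu%:R) (lam%:R - mu%:R) mu%:R.
  rewrite {1}/M mulmx_suml.
  transitivity (\sum_(d in D) \sum_(e in D) rG (d * e^-1)%g).
    apply: eq_bigr => d dD; rewrite mulmx_sumr [RHS](reindex_inj invg_inj) /=.
    apply: eq_big => [e | e eD]; first by rewrite invD.
    by rewrite invgK repr_mxM ?(subsetP sDG).
  rewrite (@dsum_nrep _ G D _ rG sDG) (@sum_nrep _ G D v k lam mu _ rG hP hR).
  by rewrite repr_mx1.
have ha' : k%:R - mu%:R = - (t ^+ 2 + t * s%:R) :> algC.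
  by apply/eqP; rewrite -subr_eq0 opprK addrC ha.
have hmu : mu%:R = ((k%:R : algC) ^+ 2 + (t ^+ 2 + t * s%:R) - (2 * t + s%:R) * k%:R) / #|G|%:R.
  by rewrite kk ha' hb; field.
set P := comb M S (- t / s%:R) (s%:R^-1) (- (k%:R - t) / (s%:R * #|G|%:R)).
have PP : P *m P = P.
  rewrite /P (@comb_mul _ M S _ _ _ _ _ MM MS SM SS) ha' hb; congr comb.
  - field; done.
  - field; done.
  - rewrite hmu; field; by apply/andP.
have := @trace_idem _ _ P PP; rewrite /P trace_comb => trP.
exists (\rank P); rewrite -trP.
have -> : \sum_(d in D) cfRepr rG d = \tr M.
  rewrite /M raddf_sum; apply: eq_bigr => d dD.
  by rewrite cfunE (subsetP sDG d dD) mulr1n.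
have -> : \sum_(g in G) cfRepr rG g = \tr S.
  rewrite /S raddf_sum; apply: eq_bigr => d dD.
  by rewrite cfunE dD mulr1n.
by field; apply/andP.
Qed.

Lemma theta_facts (k lam mu s : nat) : (s%:Z ^+ 2 = PDS_Delta k lam mu) ->
  2 * theta2 lam mu s = lam%:Z - mu%:Z - s%:Z /\
  theta2 lam mu s ^+ 2 + theta2 lam mu s * s%:Z + (k%:Z - mu%:Z) = 0.
Proof.
rewrite /PDS_Delta /theta2 => hD.
set x := lam%:Z - mu%:Z - s%:Z.
have e := divz_eq x 2.
have r0 := modz_ge0 x (isT : (2:int) != 0).
have r1 := ltz_pmod x (isT : (0:int) < 2).
set q := (x %/ 2)%Z in e *; set r := (x %% 2)%Z in e r0 r1.
move: hD; rewrite !expr2 => hD.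
have hr : r = 0 by rewrite /x in e; nia.
rewrite hr addr0 in e; split; first by rewrite e mulrC.
rewrite /x in e; nia.
Qed.

Lemma key_alg (gT : finGroupType) (G : {group gT}) (D : {set gT}) v k lam mu s h :
  is_PDS G D v k lam mu -> regular_PDS D -> (mu < k)%N ->
  (s%:Z ^+ 2)%R = PDS_Delta k lam mu -> h \in G ->
  exists z : int, ((#|(h ^: G)%g :&: D| * #|'C_G[h]%g|)%N%:Z =
     theta2 lam mu s * (#|G| * (h == 1%g))%N%:Z + (k%:Z - theta2 lam mu s) + s%:Z * z)%R.
Proof.
move=> hP hR mk hD Gh; have [sDG _ _ _] := hP.
have [hT1 hT2] := @theta_facts k lam mu s hD.
set T := theta2 lam mu s in hT1 hT2 *.
set t : algC := T%:~R.
have s0 : s%:R != 0 :> algC.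
  rewrite pnatr_eq0; apply/eqP => s0; move: hD; rewrite s0 /PDS_Delta => hD.
  have : (mu%:Z < k%:Z) by rewrite ltz_nat.
  move: hD; rewrite !expr2 => hD; nia.
have hb : lam%:R - mu%:R = 2 * t + s%:R :> algC.
  have := congr1 (fun z : int => z%:~R : algC) hT1.
  rewrite /= !rmorphB !rmorphM /= => H.
  have H' : (lam%:R - mu%:R - s%:R : algC) = 2 * t by exact: (esym H).
  by rewrite -H'; ring.
have ha : t ^+ 2 + t * s%:R + (k%:R - mu%:R) = 0 :> algC.
  have := congr1 (fun z : int => z%:~R : algC) hT2.
  rewrite /= !intrD !intrM intrN => H; rewrite expr2.
  exact: H.
have irr_key (i : Iirr G) : exists r : nat,
    \sum_(d in D) 'chi_i d = t * 'chi_i 1%g + s%:R * r%:R + (k%:R - t) * (i == 0)%:R.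
  have [r Hr] := @repr_key gT G D v k lam mu s t _ 'Chi_i hP hR s0 hb ha.
  exists r; rewrite -irrRepr Hr cfRepr1; congr (_ + _ * _).
  have := first_orthogonality_relation i 0; rewrite irr0 => <-; congr (_ * _).
  apply: eq_bigr => x Gx; rewrite cfun1E groupV Gx mulr1 irrRepr //.
have [r hr] := fin_all_exists irr_key.
set X := \sum_i (r i)%:R * 'chi[G]_i h.
have A1 : \sum_i 'chi[G]_i h * 'chi_i 1%g = (#|G| * (h == 1%g))%:R.
  transitivity (\sum_i 'chi[G]_i h * ('chi_i 1%g)^*).
    by apply: eq_bigr => i _; rewrite -irr_inv invg1.
  rewrite second_orthogonality_relation // class1G inE.
  have [->|nh] := eqVneq h 1%g; last by rewrite muln0.
  by rewrite muln1 cent11T setIT.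
have A2 : \sum_i 'chi[G]_i h * (i == 0)%:R = 1.
  rewrite (bigD1 0) //= ?eqxx mulr1 big1 ?addr0.
    by rewrite irr0 cfun1E Gh.
  by move=> i /negbTE ->; rewrite mulr0.
have E : ((#|(h ^: G)%g :&: D| * #|'C_G[h]%g|)%N%:R : algC) =
    t * (#|G| * (h == 1%g))%N%:R + (k%:R - t) + s%:R * X.
  transitivity (\sum_(d in D) \sum_i 'chi[G]_i h * ('chi_i d)^*).
    rewrite (eq_bigr (fun d => if d \in (h ^: G)%g then #|'C_G[h]%g|%:R else 0)); last first.
      move=> d dD; rewrite second_orthogonality_relation; last exact: (subsetP sDG).
      have -> : (h \in (d ^: G)%g) = (d \in (h ^: G)%g) by apply: class_sym.
      by case: (d \in _).
    rewrite -big_mkcondr sumr_const natrM mulr_natl.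
    congr (_ *+ _); apply: eq_card => d; rewrite !inE andbC //.
  rewrite exchange_big /=.
  transitivity (\sum_i 'chi[G]_i h * (\sum_(d in D) 'chi_i d)^*).
    by apply: eq_bigr => i _; rewrite rmorph_sum mulr_sumr.
  under eq_bigr => i _ do rewrite hr !rmorphD !rmorphM /= -{1}irr_inv invg1 !rmorph_nat rmorphB /= rmorph_nat /t rmorph_int.
  transitivity (t * \sum_i 'chi[G]_i h * 'chi_i 1%g + s%:R * X + (k%:R - t) * \sum_i 'chi[G]_i h * (i == 0)%:R).
    rewrite /X !mulr_sumr -!big_split /=; apply: eq_bigr => i _; rewrite /t; ring.
  by rewrite A1 A2 mulr1 addrAC.
have XA : X \in Aint.
  by apply: rpred_sum => i _; apply: rpredM; [apply: rpred_nat | apply: Aint_irr].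
have XQ : X \in Crat.
  have -> : X = (((#|(h ^: G)%g :&: D| * #|'C_G[h]%g|)%N%:R : algC)
                 - t * (#|G| * (h == 1%g))%N%:R - (k%:R - t)) / s%:R.
    by rewrite E; field.
  by rewrite /t; rewrite !(rpredB, rpredM, rpredV, rpred_nat, rpred_int).
have [z hz] := intrP (Cint_rat_Aint XQ XA).
exists z; apply: (@intr_inj algC).
rewrite !intrD !intrM -/t /=; rewrite -hz.
rewrite intrN; exact: E.
Qed.

Lemma modhelp (a b c : int) (s m : nat) (z : int) :
  (m %| s)%N -> a = b + s%:Z * z -> b = c -> (a = c %[mod m%:Z])%Z.
Proof.
move=> ms -> ->; rewrite -(divnK ms) PoszM addrC mulrAC.
exact: modzMDl.
Qed.

Local Close Scope ring_scope.

Theorem mainTheorem16 (gT : finGroupType) (G : {group gT}) (D : {set gT})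
    (v k lam mu s p : nat) :
  is_PDS G D v k lam mu -> regular_PDS D ->
  (0 < mu)%N -> (mu < k)%N ->
  (s%:Z ^+ 2)%R = PDS_Delta k lam mu ->
  prime p -> (p %| s)%N ->
  (forall h, h \in G -> h != 1%g ->
     ~~ (p ^ logn p s %| #|('C_G[h])%g|)%N ->
     ((#|((h ^: G)%g :&: D)| * #|('C_G[h])%g|)%:Z = k%:Z - theta2 lam mu s
        %[mod (p ^ logn p s)%:Z])%Z)
  /\
  ((#|(((1%g : gT) ^: G)%g :&: D)| * #|('C_G[1%g])%g|)%:Z
     = k%:Z + theta2 lam mu s * (#|G|%:Z - 1)
     %[mod (p ^ logn p s)%:Z])%Z.
Proof.
move=> hP hR _ mk hD _ _.
have ms := pfactor_dvdnn p s.
split.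
  move=> h Gh nh _.
  have [z hz] := @key_alg gT G D v k lam mu s h hP hR mk hD Gh.
  apply: (@modhelp _ _ _ _ _ _ ms hz).
  by rewrite (negbTE nh) muln0 GRing.mulr0 GRing.add0r.
have [z hz] := @key_alg gT G D v k lam mu s 1%g hP hR mk hD (group1 G).
apply: (@modhelp _ _ _ _ _ _ ms hz).
rewrite eqxx muln1; ring.
Qed.
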